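(* Let $\Theta\subseteq\mathbb{R}$ be an interval (the parameter space), $X$ a sample space, and let $p(x\mid\theta)>0$ for all $x\in X$, $\theta\in\Theta$ be the sampling probability (or density) of $x$ given $\theta$. Suppose that to every single observation $x\in X$ a probability density $f(\theta\mid x)$ on $\Theta$ is assigned, and that a second, independent observation $x_2$ is taken into account by Bayes' rule, $$f(\theta\mid x_1x_2)=\frac{f(\theta\mid x_1)\,p(x_2\mid\theta)}{\int_\Theta f(\theta'\mid x_1)\,p(x_2\mid\theta')\,d\theta'} ,$$ where the denominators are finite and positive. Then the following are equivalent: (i) the result is invariant under reversing the order of the two observations, i.e. for all $x_1,x_2\in X$ and all $\theta\in\Theta$, $$\frac{f(\theta\mid x_1)\,p(x_2\mid\theta)}{\int_\Theta f(\theta'\mid x_1)\,p(x_2\mid\theta')\,d\theta'}=\frac{f(\theta\mid x_2)\,p(x_1\mid\theta)}{\int_\Theta f(\theta'\mid x_2)\,p(x_1\mid\theta')\,d\theta'} ;$$ (ii) there exists a nonnegative function $\pi$ on $\Theta$ (independent of $x$) such that for every $x\in X$, $\int_\Theta \pi(\theta')p(x\mid\theta')\,d\theta'\in(0,\infty)$ and $$f(\theta\mid x)=\frac{\pi(\theta)\,p(x\mid\theta)}{\int_\Theta\pi(\theta')\,p(x\mid\theta')\,d\theta'}\quad\text{for all }\theta\in\Theta .$$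
   Context: The function $\pi$ in (ii) is called the consistency factor; it is only a proportionality coefficient and is not required to be integrable over $\Theta$. *)

(* Defs.v *)
From HB Require Import structures.
From mathcomp Require Import all_boot all_order all_algebra.
From mathcomp Require Import all_classical all_reals all_analysis.
Set Implicit Arguments. Unset Strict Implicit. Unset Printing Implicit Defensive.
Import Order.TTheory GRing.Theory Num.Theory.
Local Open Scope classical_set_scope.
Local Open Scope ring_scope.

Definition intTheta (R : realType) (Theta : set R) (g : R -> R) : \bar R :=
  (\int[@lebesgue_measure R]_(t in Theta) (g t)%:E)%E.

Definition density_on (R : realType) (Theta : set R) (g : R -> R) : Prop :=
  measurable_fun Theta g /\ (forall t, Theta t -> 0 <= g t) /\
  intTheta Theta g = 1%E.

Definition bayes_update (R : realType) (X : Type) (Theta : set R)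
  (f : X -> R -> R) (p : X -> R -> R) (x1 x2 : X) (t : R) : R :=
  f x1 t * p x2 t / fine (intTheta Theta (fun s => f x1 s * p x2 s)).

Definition finite_pos (R : realType) (e : \bar R) : Prop :=
  (0 < e)%E /\ (e < +oo)%E.

(* Main.v *)
Require Import Defs.
From HB Require Import structures.
From mathcomp Require Import all_boot all_order all_algebra.
From mathcomp Require Import all_classical all_reals all_analysis.
From mathcomp Require Import ring lra measurable_realfun.
Import Order.TTheory GRing.Theory Num.Theory.
Local Open Scope classical_set_scope.
Local Open Scope ring_scope.

Lemma fp_real (R : realType) (e : \bar R) :
  finite_pos e -> exists z : R, 0 < z /\ e = z%:E.
Proof.
case: e => [z| |] [h1 h2] //; by exists z; split => //; rewrite -lte_fin.
Qed.

Arguments fp_real {R e}.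

Lemma scale_int (R : realType) (Theta : set R) (g h : R -> R) (c : R) :
  measurable Theta -> measurable_fun Theta g ->
  (forall t, Theta t -> 0 <= g t) -> 0 <= c ->
  (forall t, Theta t -> h t = c * g t) ->
  intTheta Theta h = (c%:E * intTheta Theta g)%E.
Proof.
move=> mT mg g0 c0 hE; rewrite /intTheta.
transitivity (\int[@lebesgue_measure R]_(t in Theta) (c%:E * (g t)%:E))%E.
  by apply: eq_integral => t; rewrite inE => Tt; rewrite hE.
apply: ge0_integralZl_EFin => //.
- exact/measurable_EFinP.

Qed.

Theorem mainTheorem1 (R : realType) (Theta : set R) (X : Type)
  (p : X -> R -> R) (f : X -> R -> R) :
  is_interval Theta ->
  (forall x t, Theta t -> 0 < p x t) ->
  (forall x, measurable_fun Theta (p x)) ->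
  (forall x, density_on Theta (f x)) ->
  (forall x1 x2, finite_pos (intTheta Theta (fun s => f x1 s * p x2 s))) ->
  (forall x1 x2 t, Theta t ->
      bayes_update Theta f p x1 x2 t = bayes_update Theta f p x2 x1 t)
  <->
  (exists pi : R -> R,
     (forall t, Theta t -> 0 <= pi t) /\
     forall x,
       finite_pos (intTheta Theta (fun s => pi s * p x s)) /\
       forall t, Theta t ->
         f x t = pi t * p x t / fine (intTheta Theta (fun s => pi s * p x s))).
Proof.
move=> iT p0 mp fd Zfp.
have mT : measurable Theta by exact: is_interval_measurable.
split.
- move=> H.
  have [[x0 _]|nX] := pselect (exists x : X, True); last first.
    by exists (fun=> 0); split => // x; exfalso; apply: nX; exists x.
  exists (fun t => f x0 t / p x0 t); split.
    move=> t Tt; apply: divr_ge0; last exact: ltW (p0 _ _ Tt).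
    by case: (fd x0) => _ [+ _]; apply.
  move=> x.
  have [a [a0 Ea]] := fp_real (Zfp x0 x).
  have [b [b0 Eb]] := fp_real (Zfp x x0).
  have key : forall t, Theta t -> f x0 t / p x0 t * p x t = (a / b) * f x t.
    move=> t Tt; have := H x0 x t Tt; rewrite /bayes_update Ea Eb /= => e.
    have pn : p x0 t != 0 by rewrite gt_eqF // p0.
    have an : a != 0 by rewrite gt_eqF.
    have bn : b != 0 by rewrite gt_eqF.
    have e2 : f x0 t * p x t = a * (f x t * p x0 t / b).
      by rewrite -e; field; rewrite ?pn ?an ?bn.
    by rewrite mulrAC e2; field; rewrite ?pn ?an ?bn.
  case: (fd x) => mf [f0 f1].
  have I := @scale_int R Theta (f x) (fun s => f x0 s / p x0 s * p x s) (a / b)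
     mT mf f0 (ltW (divr_gt0 a0 b0)) key.
  rewrite I f1 mule1 /=; split.
    by split; [rewrite lte_fin divr_gt0|rewrite ltry].
  move=> t Tt; rewrite key //; field.
  by apply/andP; split; rewrite gt_eqF.
- move=> [pi [pi0 Hpi]] x1 x2 t Tt.
  have [N1 [N10 EN1]] := fp_real (Hpi x1).1.
  have [N2 [N20 EN2]] := fp_real (Hpi x2).1.
  have F1 := (Hpi x1).2; have F2 := (Hpi x2).2.
  rewrite EN1 /= in F1; rewrite EN2 /= in F2.
  have [z12 [z120 E12]] := fp_real (Zfp x1 x2).
  have [z21 [z210 E21]] := fp_real (Zfp x2 x1).
  have mfp : forall y1 y2, measurable_fun Theta (fun s => f y1 s * p y2 s).
    move=> y1 y2; apply: measurable_funM => //; by case: (fd y1).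
  have fp0 : forall y1 y2 s, Theta s -> 0 <= f y1 s * p y2 s.
    move=> y1 y2 s Ts; apply: mulr_ge0; last exact: ltW (p0 _ _ Ts).
    by case: (fd y1) => _ [+ _]; apply.
  have M1 := @scale_int R Theta (fun s => f x1 s * p x2 s)
     (fun s => pi s * p x1 s * p x2 s) N1 mT (mfp _ _) (fp0 _ _) (ltW N10).
  have M2 := @scale_int R Theta (fun s => f x2 s * p x1 s)
     (fun s => pi s * p x1 s * p x2 s) N2 mT (mfp _ _) (fp0 _ _) (ltW N20).
  rewrite E12 in M1; rewrite E21 in M2.
  have e : N1 * z12 = N2 * z21.
    apply/eqP; rewrite -eqe EFinM -M1 ?M2 ?EFinM //.
    + by move=> s Ts; rewrite F2 //; field; rewrite gt_eqF.
    + by move=> s Ts; rewrite F1 //; field; rewrite gt_eqF.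
  rewrite /bayes_update E12 E21 /= F1 // F2 //.
  have -> : z21 = N1 * z12 / N2 by rewrite e; field; rewrite gt_eqF.
  have n1 : N1 != 0 by rewrite gt_eqF.
  have n2 : N2 != 0 by rewrite gt_eqF.
  have n3 : z12 != 0 by rewrite gt_eqF.
  by field; rewrite n1 n2 n3.
Qed.
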